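(* Let $\lambda_0\in(0,1/2)$ and let $\nu$ be uniformly distributed on $[0,\pi]$, $n_1=\cos\nu$, $n_2=\sin\nu$. Then $$E\left[n_2^2n_1\log\left(\frac{1-\frac{4\lambda_0n_1}{1+4\lambda_0^2}}{1+\frac{4\lambda_0n_1}{1+4\lambda_0^2}}\right)\right]=-\lambda_0+\frac43\lambda_0^3.$$
   Context: Here $\log$ is the natural logarithm. *)

(* Defs.v *)
From Stdlib Require Import Reals.
From Coquelicot Require Import Coquelicot.
Open Scope R_scope.

(* Expectation of g(nu) for nu uniformly distributed on [0, PI]:
   E[g(nu)] = (1/PI) * int_0^PI g(nu) dnu.  Existence of the integral is
   asserted separately in the statement (ex_RInt). *)
Definition unif_0_pi_expect (g : R -> R) : R := RInt g 0 PI / PI.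

Definition lemma7_integrand (l0 : R) (nu : R) : R :=
  let n1 := cos nu in
  let n2 := sin nu in
  let a := 4 * l0 * n1 / (1 + 4 * l0 ^ 2) in
  n2 ^ 2 * n1 * ln ((1 - a) / (1 + a)).

(* Main.v *)
Require Import Defs.
From Stdlib Require Import Reals Lra Nsatz.
From Coquelicot Require Import Coquelicot.
Open Scope R_scope.
Definition G (k x : R) := x + atan ((1-k) * sin x * cos x / (k * cos x ^2 + sin x ^2)).
Lemma posq k s c : 0 < k -> s^2 + c^2 = 1 -> 0 < k * c^2 + s^2.
Proof. intros. destruct (Rle_lt_dec k 1); nra. Qed.
Lemma G_der : forall k x, 0 < k -> is_derive (G k) x (k / (sin x ^2 + k^2 * cos x ^2)).
intros k x hk. unfold G. 
assert (e := sin2_cos2 x). 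
auto_derive.
- pose proof (posq k (sin x) (cos x) hk ltac:(unfold Rsqr in e; nra)). intro; nra.
- generalize dependent (sin x); generalize dependent (cos x). intros c s e.
  pose proof (posq k s c hk ltac:(unfold Rsqr in e; nra)).
  pose proof (posq (k^2) s c ltac:(nra) ltac:(unfold Rsqr in e; nra)).
  unfold Rsqr in e. field_simplify_eq.
  + clear H H0 hk. cbn [pow]. nsatz.
  + repeat split; try (intro; nra).
Qed.

Definition P (a k x : R) :=
  / (a^2)^2 * ((2*a^2-1) * x - a^2 * (x/2 + sin x * cos x / 2) + k^3 * G k x).

Lemma P_der a k x : 0 < a < 1 -> 0 < k -> k^2 = 1 - a^2 ->
  is_derive (P a k) x (sin x ^ 4 / (1 - a^2 * cos x ^ 2)).
Proof.
  intros ha hk hk2.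
  unfold P.
  apply is_derive_ext with (f := fun x => / (a^2)^2 * ((2*a^2-1) * x - a^2 * (x/2 + sin x * cos x / 2) + k^3 * G k x)); [reflexivity|].
  replace (sin x ^ 4 / (1 - a^2 * cos x ^ 2)) with
    (/ (a^2)^2 * ((2*a^2-1) * 1 - a^2 * (1/2 + (cos x * cos x - sin x * sin x) / 2) + k^3 * (k / (sin x ^2 + k^2 * cos x ^2)))).
  2:{ assert (e := sin2_cos2 x). generalize dependent (sin x); generalize dependent (cos x). intros c s e.
      unfold Rsqr in e.
      assert (0 < 1 - a^2 * c^2) by (assert (c*c <= 1) by nra; nra).
      assert (s^2 + k^2*c^2 = 1 - a^2*c^2) by nra.
      rewrite H0. field_simplify_eq. 2:{ split; [lra| nra]. }
      clear H H0. cbn [pow] in *. nsatz. }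
  apply is_derive_scal. apply @is_derive_plus. apply @is_derive_minus.
  - auto_derive; [auto|ring].
  - auto_derive; [auto|field].
  - apply is_derive_scal. apply G_der; auto.
Qed.

Definition g (a x : R) := sin x ^ 2 * cos x * ln ((1 - a * cos x) / (1 + a * cos x)).
Definition H (a k x : R) := sin x ^ 3 / 3 * ln ((1 - a * cos x) / (1 + a * cos x)) - 2 * a / 3 * P a k x.

Lemma bnd a x : 0 < a < 1 -> 0 < 1 - a * cos x /\ 0 < 1 + a * cos x.
Proof. intros. pose proof (COS_bound x). nra. Qed.

Lemma H_der a k x : 0 < a < 1 -> 0 < k -> k^2 = 1 - a^2 ->
  is_derive (H a k) x (g a x).
Proof.
  intros ha hk hk2. unfold H.
  destruct (bnd a x ha) as [b1 b2].
  evar (d1 : R).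
  apply is_derive_ext with (f := fun x => sin x ^ 3 / 3 * ln ((1 - a * cos x) / (1 + a * cos x)) - 2 * a / 3 * P a k x); [reflexivity|].
  assert (D1 : is_derive (fun x => sin x ^ 3 / 3 * ln ((1 - a * cos x) / (1 + a * cos x))) x d1).
  { auto_derive. { repeat split; try (apply Rdiv_lt_0_compat; lra). lra. }
    unfold d1. reflexivity. }

  pose proof (@is_derive_minus R_AbsRing _ _ _ x _ _ D1 (is_derive_scal _ x (2*a/3) _ (P_der a k x ha hk hk2))) as D.
  eapply is_derive_ext; [reflexivity|].
  replace (g a x) with (minus d1 (scal (2*a/3) (sin x ^ 4 / (1 - a ^ 2 * cos x ^ 2)))); [exact D|].
  unfold g, d1. clear D D1 d1.
  assert (e := sin2_cos2 x). generalize dependent (sin x); generalize dependent (cos x). intros c b1 b2 s e.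
  unfold Rsqr in e. unfold minus, plus, opp, scal; simpl. unfold mult; simpl.
  change (ln ((1 + - (a * c)) * / (1 + a * c))) with (ln ((1 - a*c)/(1+a*c))).
  generalize (ln ((1 - a*c)/(1+a*c))); intro L.
  field_simplify_eq. 2:{ repeat split; nra. }
  clear - e. cbn [pow] in *. nsatz.
Qed.

Lemma g_int a k : 0 < a < 1 -> 0 < k -> k^2 = 1 - a^2 ->
  is_RInt (g a) 0 PI (- 2 * a / 3 / (a^2)^2 * (PI * (2*a^2-1) - a^2 * PI / 2 + k^3 * PI)).
Proof.
  intros ha hk hk2.
  assert (HI : is_RInt (g a) 0 PI (minus (H a k PI) (H a k 0))).
  { apply (@is_RInt_derive R_CompleteNormedModule (H a k) (g a)).
    - intros x _. exact (H_der a k x ha hk hk2).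
    - intros x _. apply (@ex_derive_continuous R_AbsRing R_NormedModule). unfold g.
      destruct (bnd a x ha). auto_derive. repeat split; try (apply Rdiv_lt_0_compat; lra). lra. }
  replace (- 2 * a / 3 / (a^2)^2 * (PI * (2*a^2-1) - a^2 * PI / 2 + k^3 * PI)) with (minus (H a k PI) (H a k 0)); [exact HI|].
  unfold minus, plus, opp; simpl. unfold H, P, G.
  rewrite sin_PI, cos_PI, sin_0, cos_0.
  replace ((1 - k) * 0 * -1 / (k * (-1) ^ 2 + 0 ^ 2)) with 0 by (field; lra).
  replace ((1 - k) * 0 * 1 / (k * 1 ^ 2 + 0 ^ 2)) with 0 by (field; lra).
  rewrite atan_0. field. lra.
Qed.

Theorem lemma7 (l0 : R) (hl0 : 0 < l0 < 1 / 2) :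
  ex_RInt (lemma7_integrand l0) 0 PI /\
  unif_0_pi_expect (lemma7_integrand l0) = - l0 + 4 / 3 * l0 ^ 3.
Proof.
  set (a := 4 * l0 / (1 + 4 * l0^2)).
  set (k := (1 - 4 * l0^2) / (1 + 4 * l0^2)).
  assert (ha : 0 < a < 1).
  { assert (0 < (1 - 2*l0)*(1-2*l0)) by (apply Rmult_lt_0_compat; lra).
    unfold a. split; [apply Rdiv_lt_0_compat; nra|]. assert (1 - 4 * l0 / (1 + 4 * l0 ^ 2) = (1 - 2*l0)*(1-2*l0) / (1 + 4 * l0^2)) by (field; nra).
    assert (0 < (1 - 2*l0)*(1-2*l0) / (1 + 4 * l0^2)) by (apply Rdiv_lt_0_compat; nra). lra. }
  assert (hk : 0 < k) by (unfold k; apply Rdiv_lt_0_compat; nra).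
  assert (hk2 : k^2 = 1 - a^2) by (unfold k, a; field; nra).
  assert (E : forall x, g a x = lemma7_integrand l0 x).
  { intro x. unfold g, lemma7_integrand. cbv zeta.
    replace (4 * l0 * cos x / (1 + 4 * l0 ^ 2)) with (a * cos x) by (unfold a; field; nra).
    reflexivity. }
  pose proof (is_RInt_ext _ _ _ _ _ (fun x _ => E x) (g_int a k ha hk hk2)) as HI.
  split; [eexists; exact HI|].
  unfold unif_0_pi_expect. rewrite (is_RInt_unique _ _ _ _ HI).
  pose proof PI_RGT_0.
  unfold k, a. field. repeat split; nra.
Qed.
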